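(* For every $x>0$, $$\int_0^\infty\frac{\sin^2t}{(t+x)^2}\,dt<\frac{1}{2x}\qquad\text{and}\qquad\int_0^\infty\frac{|\sin t|}{(t+x)^2}\,dt<\frac{2}{\pi x}.$$ *)

(* Defs.v *)
From Stdlib Require Import Reals.
From Coquelicot Require Export Coquelicot.

(* Main.v *)
Require Import Defs.
From Stdlib Require Import Reals Lra Psatz Classical.
From Coquelicot Require Import Coquelicot.
Open Scope R_scope.

Lemma sin_ub_eq a : sin_ub a = a - a^3/6 + a^5/120 - a^7/5040 + a^9/362880.
Proof.
unfold sin_ub, sin_approx, sin_term. cbn [sum_f_R0 Nat.mul Nat.add].
rewrite !fact_simpl. cbn [Factorial.fact].
rewrite !mult_INR. rewrite !INR_IZR_INZ. cbn [Z.of_nat Pos.of_succ_nat Pos.succ]. field.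
Qed.

Lemma sin_lb_eq a : sin_lb a = a - a^3/6 + a^5/120 - a^7/5040.
Proof.
unfold sin_lb, sin_approx, sin_term. cbn [sum_f_R0 Nat.mul Nat.add].
rewrite !fact_simpl. cbn [Factorial.fact].
rewrite !mult_INR. rewrite !INR_IZR_INZ. cbn [Z.of_nat Pos.of_succ_nat Pos.succ]. field.
Qed.

Lemma pi_bound : PI < 173/50.
Proof.
  destruct (Rlt_or_le PI (173/50)) as [H|H]; [exact H|].
  exfalso.
  assert (H1 := SIN (173/50) ltac:(lra) H).
  assert (H2 := sin_ge_0 (173/50) ltac:(lra) H).
  destruct H1 as [_ H1]. rewrite sin_ub_eq in H1.
  lra.
Qed.

Lemma sin_para_half s : 0 < s <= PI/2 -> s * (PI - s) / PI < sin s.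
Proof.
  intros [H0 H1].
  assert (Hp := pi_bound). assert (Hp2 := PI2_3_2).
  destruct (SIN s ltac:(lra) ltac:(lra)) as [H _].
  rewrite sin_lb_eq in H.
  assert (HPs : PI * s < 6) by nra.
  assert (Hpos: 0 < PI) by lra.
  assert (H2 : s*(PI-s)/PI = s - s*s/PI) by (field; lra).
  rewrite H2.
  assert (s * s / PI > s*s*s/6).
  { apply Rmult_gt_reg_l with (r := 6*PI); [nra|].
    replace (6*PI*(s*s/PI)) with (6*(s*s)) by (field; lra).
    replace (6*PI*(s*s*s/6)) with (PI*s*(s*s)) by field.
    assert (0 < s*s) by nra.
    assert (0 < (6 - PI*s)*(s*s)) by (apply Rmult_lt_0_compat; lra).
    nra. }
  assert (s^5/120 - s^7/5040 >= 0).
  { replace (s^5/120 - s^7/5040) with (s^5 * (42 - s*s)/5040) by field.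
    apply Rle_ge, Rmult_le_pos; [|lra]. apply Rmult_le_pos; [|nra]. apply pow_le; lra. }
  assert (s^3 = s*s*s) by ring. lra.
Qed.

Lemma sin_para s : 0 < s < PI -> s * (PI - s) / PI < sin s.
Proof.
  intros Hs. destruct (Rle_or_lt s (PI/2)).
  - apply sin_para_half; lra.
  - rewrite <- sin_PI_x. replace (s * (PI - s)) with ((PI - s) * (PI - (PI - s))) by ring.
    apply sin_para_half; lra.
Qed.
Lemma gen_lim (f : R -> R) (Hc : forall t, 0 <= t -> continuous f t)
  (Hp : forall t, 0 <= t -> 0 <= f t) (M : R)
  (HM : forall n : nat, RInt f 0 (INR n * PI) <= M) :
  exists L, is_RInt_gen f (at_point 0) (Rbar_locally p_infty) L /\ L <= M.
Proof.
  assert (Hex : forall a b, 0 <= a -> a <= b -> ex_RInt f a b).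
  { intros a b Ha Hab. apply (ex_RInt_continuous (V:=R_CompleteNormedModule)). intros z Hz.
    apply Hc. rewrite Rmin_left in Hz; lra. }
  assert (Hmono : forall a b, 0 <= a -> a <= b -> RInt f 0 a <= RInt f 0 b).
  { intros a b Ha Hab.
    assert (HC := RInt_Chasles (V:=R_CompleteNormedModule) f 0 a b (Hex 0 a ltac:(lra) Ha) (Hex a b Ha Hab)).
    rewrite <- HC.
    assert (0 <= RInt f a b).
    { apply RInt_ge_0; [lra| apply Hex; lra |]. intros; apply Hp; lra. }
    change (RInt f 0 a <= RInt f 0 a + RInt f a b). lra. }
  assert (Hbnd : forall b, 0 <= b -> RInt f 0 b <= M).
  { intros b Hb. destruct (INR_archimed PI b PI_RGT_0) as [n Hn].
    apply Rle_trans with (RInt f 0 (INR n * PI)); [|apply HM].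
    apply Hmono; lra. }
  set (E := fun y => exists b, 0 <= b /\ y = RInt f 0 b).
  destruct (completeness E) as [L [HL1 HL2]].
  { exists M. intros y [b [Hb ->]]. apply Hbnd; exact Hb. }
  { exists (RInt f 0 0). exists 0. split; [lra|reflexivity]. }
  exists L. split.
  2:{ apply HL2. intros y [b [Hb ->]]. apply Hbnd; exact Hb. }
  intros P [eps HP].
  assert (Hb0 : exists b0, 0 <= b0 /\ L - eps < RInt f 0 b0).
  { apply NNPP. intros Hn.
    assert (L <= L - eps).
    { apply HL2. intros y [b [Hb ->]].
      destruct (Rle_or_lt (RInt f 0 b) (L - eps)) as [h|h]; [exact h|].
      exfalso; apply Hn; exists b; split; assumption. }
    destruct eps; simpl in *; lra. }
  destruct Hb0 as [b0 [Hb0 Hlt]].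
  apply Filter_prod with (Q := fun a => a = 0) (R := fun b => b0 < b).
  - reflexivity.
  - exists b0. intros y Hy; exact Hy.
  - intros a b Ha Hb. simpl. subst a. exists (RInt f 0 b). split.
    + apply (RInt_correct (V:=R_CompleteNormedModule)), Hex; lra.
    + apply HP. assert (RInt f 0 b <= L) by (apply HL1; exists b; split; [lra|reflexivity]).
      assert (RInt f 0 b0 <= RInt f 0 b) by (apply Hmono; lra).
      change (Rabs (RInt f 0 b - L) < eps). rewrite Rabs_left1; lra.
Qed.
Lemma dK x t : 0 < t + x -> is_derive (fun t => -1/(2*(t+x)) - sin t * cos t/(2*(t+x)^2) - sin t ^2/(2*(t+x)^3)) t
   (sin t ^2/(t+x)^2 + 3/2 * (sin t^2/(t+x)^4)).
Proof.
intros H. auto_derive.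
{ repeat split; apply Rgt_not_eq, Rlt_gt; repeat apply Rmult_lt_0_compat; lra. }
assert (Hs := sin2_cos2 t). unfold Rsqr in Hs.
replace (1 * cos t * cos t + sin t * (1 * - sin t)) with (1 - 2 * sin t ^2) by nra.
field. lra.
Qed.
Lemma dH x c t : 0 < t + x -> is_derive (fun t => -2/(PI*(t+x)) + (1 - cos(t-c) - 2*(t-c)/PI)/(t+x)^2 + 2*((t-c) - sin(t-c) - (t-c)^2/PI)/(t+x)^3) t
   (sin (t-c)/(t+x)^2 - 6*((t-c) - sin(t-c) - (t-c)^2/PI)/(t+x)^4).
Proof.
intros H. assert (HP := PI_RGT_0). auto_derive.
{ assert (0 < (t+x)*(t+x)) by nra. repeat split; try nra. }
unfold Rminus. field. split; lra.
Qed.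

Lemma antider_le f g K a b : a <= b ->
  (forall t, a <= t <= b -> is_derive K t (g t)) ->
  (forall t, a <= t <= b -> continuous g t) ->
  (forall t, a <= t <= b -> continuous f t) ->
  (forall t, a < t < b -> f t <= g t) -> RInt f a b <= K b - K a.
Proof.
  intros Hab HK Hg Hf Hle.
  assert (HI : is_RInt g a b (minus (K b) (K a))).
  { apply (is_RInt_derive (V:=R_CompleteNormedModule)); intros t Ht;
    rewrite Rmin_left, Rmax_right in Ht by lra; auto. }
  assert (HR : RInt g a b = K b - K a) by (apply is_RInt_unique; exact HI).
  rewrite <- HR. apply RInt_le; auto.
  - apply (ex_RInt_continuous (V:=R_CompleteNormedModule)); intros t Ht;
    rewrite Rmin_left, Rmax_right in Ht by lra; auto.
  - exists (minus (K b) (K a)); exact HI.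
Qed.

Lemma antider_lt f g K a b : a < b ->
  (forall t, a <= t <= b -> is_derive K t (g t)) ->
  (forall t, a <= t <= b -> continuous g t) ->
  (forall t, a <= t <= b -> continuous f t) ->
  (forall t, a < t < b -> f t < g t) -> RInt f a b < K b - K a.
Proof.
  intros Hab HK Hg Hf Hle.
  assert (HI : is_RInt g a b (minus (K b) (K a))).
  { apply (is_RInt_derive (V:=R_CompleteNormedModule)); intros t Ht;
    rewrite Rmin_left, Rmax_right in Ht by lra; auto. }
  assert (HR : RInt g a b = K b - K a) by (apply is_RInt_unique; exact HI).
  rewrite <- HR. apply RInt_lt; auto.
Qed.

Lemma tele (f Phi : R -> R) (d : R)
  (Hex : forall a b, 0 <= a -> a <= b -> ex_RInt f a b)
  (H1 : RInt f 0 PI <= Phi PI - Phi 0 - d)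
  (Hk : forall n : nat, RInt f (INR n * PI) (INR n * PI + PI)
          <= Phi (INR n * PI + PI) - Phi (INR n * PI)) :
  forall n, RInt f 0 (INR (S n) * PI) <= Phi (INR (S n) * PI) - Phi 0 - d.
Proof.
  assert (HP := PI_RGT_0).
  induction n.
  - simpl INR. rewrite Rmult_1_l. exact H1.
  - assert (E : INR (S (S n)) * PI = INR (S n) * PI + PI) by (rewrite S_INR; ring).
    rewrite E.
    assert (Hn := pos_INR (S n)).
    assert (Hn2 : 0 <= INR (S n) * PI) by nra.
    assert (HC := RInt_Chasles (V:=R_CompleteNormedModule) f 0 (INR (S n) * PI) (INR (S n) * PI + PI)
      (Hex 0 _ (Rle_refl 0) Hn2) (Hex (INR (S n) * PI) (INR (S n) * PI + PI) Hn2 ltac:(lra))).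
    rewrite <- HC. change (RInt f 0 (INR (S n) * PI) + RInt f (INR (S n) * PI) (INR (S n) * PI + PI)
       <= Phi (INR (S n) * PI + PI) - Phi 0 - d).
    specialize (Hk (S n)). lra.
Qed.

Lemma sinNPI n : sin (INR n * PI) = 0.
Proof.
  induction n.
  - simpl. rewrite Rmult_0_l. apply sin_0.
  - rewrite S_INR, Rmult_plus_distr_r, Rmult_1_l, neg_sin, IHn. ring.
Qed.

Lemma abs_sin_shift0 n t : Rabs (sin (t - INR n * PI)) = Rabs (sin t).
Proof.
  induction n.
  - simpl. f_equal. f_equal. ring.
  - rewrite S_INR. replace (t - (INR n + 1) * PI) with ((t - INR n * PI) - PI) by ring.
    rewrite sin_minus, cos_PI, sin_PI.
    replace (sin (t - INR n * PI) * -1 - cos (t - INR n * PI) * 0) with (- sin (t - INR n * PI)) by ring.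
    rewrite Rabs_Ropp. exact IHn.
Qed.

Lemma abs_sin_shift n t : INR n * PI <= t <= INR n * PI + PI ->
  Rabs (sin t) = sin (t - INR n * PI).
Proof.
  intros Ht. rewrite <- (abs_sin_shift0 n t). apply Rabs_pos_eq.
  apply sin_ge_0; lra.
Qed.

Lemma part1 x (hx : 0 < x) : exists I1 : R,
      is_RInt_gen (fun t : R => (sin t) ^ 2 / (t + x) ^ 2)
                  (at_point 0) (Rbar_locally p_infty) I1
      /\ I1 < 1 / (2 * x).
Proof.
  assert (HP := PI_RGT_0).
  set (f := fun t : R => (sin t) ^ 2 / (t + x) ^ 2).
  set (K := fun t => -1/(2*(t+x)) - sin t * cos t/(2*(t+x)^2) - sin t ^2/(2*(t+x)^3)).
  set (g := fun t => sin t ^2/(t+x)^2 + 3/2 * (sin t^2/(t+x)^4)).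
  set (Phi := fun t => -1/(2*(t+x))).
  assert (Hfc : forall t, 0 <= t -> continuous f t).
  { intros t Ht. apply (ex_derive_continuous (K:=R_AbsRing) (V:=R_NormedModule)). unfold f. auto_derive.
    assert (0 < (t+x)*(t+x)) by nra. repeat split; try nra. }
  assert (Hgc : forall t, 0 <= t -> continuous g t).
  { intros t Ht. apply (ex_derive_continuous (K:=R_AbsRing) (V:=R_NormedModule)). unfold g. auto_derive.
    assert (0 < (t+x)*(t+x)) by nra. repeat split; try nra. }
  assert (HK : forall t, 0 <= t -> is_derive K t (g t)).
  { intros t Ht. apply dK. lra. }
  assert (Hfg : forall t, 0 <= t -> f t <= g t).
  { intros t Ht. unfold f, g. assert (0 <= sin t ^ 2 / (t+x)^4).
    { apply Rmult_le_pos; [apply pow2_ge_0|]. apply Rlt_le, Rinv_0_lt_compat, pow_lt; lra. }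
    lra. }
  assert (Hex : forall a b, 0 <= a -> a <= b -> ex_RInt f a b).
  { intros a b Ha Hab. apply (ex_RInt_continuous (V:=R_CompleteNormedModule)). intros z Hz.
    apply Hfc. rewrite Rmin_left in Hz; lra. }
  assert (HKn : forall n : nat, K (INR n * PI) = Phi (INR n * PI)).
  { intros n. unfold K, Phi. rewrite sinNPI. field. assert (Hn := pos_INR n). nra. }
  assert (HKn' : forall n : nat, K (INR n * PI + PI) = Phi (INR n * PI + PI)).
  { intros n. replace (INR n * PI + PI) with (INR (S n) * PI) by (rewrite S_INR; ring). apply HKn. }
  assert (Hk : forall n : nat, RInt f (INR n * PI) (INR n * PI + PI)
          <= Phi (INR n * PI + PI) - Phi (INR n * PI)).
  { intros n. assert (Hn := pos_INR n). rewrite <- HKn, <- HKn'.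
    apply antider_le with (g := g); try lra; intros t Ht.
    - apply HK; nra.
    - apply Hgc; nra.
    - apply Hfc; nra.
    - apply Hfg; nra. }
  assert (H1s : RInt f 0 PI < K PI - K 0).
  { apply antider_lt with (g := g); try lra; intros t Ht.
    - apply HK; lra.
    - apply Hgc; lra.
    - apply Hfc; lra.
    - unfold f, g. assert (0 < sin t ^ 2 / (t+x)^4).
      { apply Rmult_lt_0_compat. { assert (0 < sin t) by (apply sin_gt_0; lra). nra. }
        apply Rinv_0_lt_compat, pow_lt; lra. }
      lra. }
  assert (HK0 : K 0 = Phi 0).
  { assert (H := HKn 0%nat). simpl INR in H. rewrite Rmult_0_l in H. exact H. }
  assert (HKP : K PI = Phi PI).
  { assert (H := HKn 1%nat). simpl INR in H. rewrite Rmult_1_l in H. exact H. }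
  set (d := Phi PI - Phi 0 - RInt f 0 PI).
  assert (Hd : 0 < d) by (unfold d; lra).
  assert (H0 : 0 <= RInt f 0 PI).
  { apply RInt_ge_0; [lra|apply Hex; lra|]. intros t Ht. unfold f.
    apply Rmult_le_pos; [apply pow2_ge_0|]. apply Rlt_le, Rinv_0_lt_compat, pow_lt; lra. }
  assert (Hd2 : d <= 1/(2*x)).
  { unfold d, Phi. assert (0 < 1/(2*(PI+x))) by (apply Rdiv_lt_0_compat; lra).
    replace (-1 / (2 * (0 + x))) with (-(1/(2*x))) by (field; lra). lra. }
  destruct (gen_lim f Hfc) with (M := 1/(2*x) - d) as [L [HL HLM]].
  { intros t Ht. unfold f. apply Rmult_le_pos; [apply pow2_ge_0|].
    apply Rlt_le, Rinv_0_lt_compat, pow_lt; lra. }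
  { intros [|n].
    - simpl. rewrite Rmult_0_l, RInt_point. change (0 <= 1/(2*x) - d). lra.
    - apply Rle_trans with (1 := tele f Phi d Hex ltac:(unfold d; lra) Hk n).
      unfold Phi. assert (Hn := pos_INR (S n)).
      assert (0 < 1/(2*(INR (S n) * PI + x))) by (apply Rdiv_lt_0_compat; nra).
      replace (-1 / (2 * (0 + x))) with (-(1/(2*x))) by (field; lra).
      replace (-1 / (2 * (INR (S n) * PI + x))) with (-(1/(2*(INR (S n) * PI + x)))) by (field; nra).
      lra. }
  exists L. split; [exact HL | lra].
Qed.

Lemma part2 x (hx : 0 < x) : exists I2 : R,
      is_RInt_gen (fun t : R => Rabs (sin t) / (t + x) ^ 2)
                  (at_point 0) (Rbar_locally p_infty) I2
      /\ I2 < 2 / (PI * x).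
Proof.
  assert (HP := PI_RGT_0).
  set (f := fun t : R => Rabs (sin t) / (t + x) ^ 2).
  set (Phi := fun t => -2/(PI*(t+x))).
  assert (Hfc : forall t, 0 <= t -> continuous f t).
  { intros t Ht. unfold f.
    apply (continuous_mult (U:=R_UniformSpace) (K:=R_AbsRing) (fun t => Rabs (sin t)) (fun t => / (t+x)^2)).
    - apply continuous_Rabs_comp. apply continuous_sin_comp. apply continuous_id.
    - apply (ex_derive_continuous (K:=R_AbsRing) (V:=R_NormedModule)). auto_derive.
      assert (0 < (t+x)*(t+x)) by nra. repeat split; try nra. }
  assert (Hex : forall a b, 0 <= a -> a <= b -> ex_RInt f a b).
  { intros a b Ha Hab. apply (ex_RInt_continuous (V:=R_CompleteNormedModule)). intros z Hz.
    apply Hfc. rewrite Rmin_left in Hz; lra. }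
  assert (Hstrict : forall n : nat, RInt f (INR n * PI) (INR n * PI + PI)
          < Phi (INR n * PI + PI) - Phi (INR n * PI)).
  { intros n. set (c := INR n * PI).
    assert (Hc : 0 <= c) by (unfold c; assert (Hn := pos_INR n); nra).
    set (g2 := fun t => sin (t - c) / (t+x)^2).
    set (H := fun t => -2/(PI*(t+x)) + (1 - cos(t-c) - 2*(t-c)/PI)/(t+x)^2
                      + 2*((t-c) - sin(t-c) - (t-c)^2/PI)/(t+x)^3).
    set (h := fun t => sin (t-c)/(t+x)^2 - 6*((t-c) - sin(t-c) - (t-c)^2/PI)/(t+x)^4).
    assert (E1 : RInt f c (c + PI) = RInt g2 c (c + PI)).
    { apply RInt_ext. intros t Ht. rewrite Rmin_left, Rmax_right in Ht by lra.
      unfold f, g2. rewrite (abs_sin_shift n t) by (unfold c in Ht; lra). reflexivity. }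
    assert (Hc0 : H c = Phi c).
    { unfold H, Phi. rewrite Rminus_diag, cos_0, sin_0. field. split; lra. }
    assert (HcP : H (c + PI) = Phi (c + PI)).
    { unfold H, Phi. replace (c + PI - c) with PI by ring. rewrite cos_PI, sin_PI.
      field. split; lra. }
    rewrite E1, <- Hc0, <- HcP.
    apply antider_lt with (g := h); try lra; intros t Ht.
    - apply dH. lra.
    - apply (ex_derive_continuous (K:=R_AbsRing) (V:=R_NormedModule)). unfold h. auto_derive.
      assert (0 < (t+x)*(t+x)) by nra. repeat split; try nra.
    - apply (ex_derive_continuous (K:=R_AbsRing) (V:=R_NormedModule)). unfold g2. auto_derive.
      assert (0 < (t+x)*(t+x)) by nra. repeat split; try nra.
    - unfold g2, h.
      assert (Hs := sin_para (t - c) ltac:(lra)).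
      assert (HQ : (t - c) - sin (t - c) - (t - c)^2/PI < 0).
      { replace ((t - c) - sin (t - c) - (t - c)^2/PI) with ((t - c) * (PI - (t - c)) / PI - sin (t - c)) by (field; lra).
        lra. }
      assert (0 < 6 * ((t - c) - sin (t - c) - (t - c)^2/PI) / (t + x)^4 * -1).
      { unfold Rdiv. assert (0 < / (t+x)^4) by (apply Rinv_0_lt_compat, pow_lt; lra).
        nra. }
      lra. }
  assert (Hk : forall n : nat, RInt f (INR n * PI) (INR n * PI + PI)
          <= Phi (INR n * PI + PI) - Phi (INR n * PI)).
  { intros n; apply Rlt_le, Hstrict. }
  assert (H1s : RInt f 0 PI < Phi PI - Phi 0).
  { assert (H := Hstrict 0%nat). simpl INR in H. rewrite Rmult_0_l, Rplus_0_l in H. exact H. }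
  set (d := Phi PI - Phi 0 - RInt f 0 PI).
  assert (Hd : 0 < d) by (unfold d; lra).
  assert (H0 : 0 <= RInt f 0 PI).
  { apply RInt_ge_0; [lra|apply Hex; lra|]. intros t Ht. unfold f.
    apply Rmult_le_pos; [apply Rabs_pos|]. apply Rlt_le, Rinv_0_lt_compat, pow_lt; lra. }
  assert (EP0 : Phi 0 = - (2/(PI*x))) by (unfold Phi; field; lra).
  assert (Hd2 : d <= 2/(PI*x)).
  { unfold d. rewrite EP0. unfold Phi.
    assert (0 < 2/(PI*(PI+x))) by (apply Rdiv_lt_0_compat; [lra|nra]).
    replace (-2 / (PI * (PI + x))) with (-(2/(PI*(PI+x)))) by (field; lra). lra. }
  destruct (gen_lim f Hfc) with (M := 2/(PI*x) - d) as [L [HL HLM]].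
  { intros t Ht. unfold f. apply Rmult_le_pos; [apply Rabs_pos|].
    apply Rlt_le, Rinv_0_lt_compat, pow_lt; lra. }
  { intros [|n].
    - simpl. rewrite Rmult_0_l, RInt_point. change (0 <= 2/(PI*x) - d). lra.
    - apply Rle_trans with (1 := tele f Phi d Hex ltac:(unfold d; lra) Hk n).
      rewrite EP0. unfold Phi. assert (Hn := pos_INR (S n)).
      assert (0 < 2/(PI*(INR (S n) * PI + x))) by (apply Rdiv_lt_0_compat; nra).
      replace (-2 / (PI * (INR (S n) * PI + x))) with (-(2/(PI*(INR (S n) * PI + x)))) by (field; nra).
      lra. }
  exists L. split; [exact HL | lra].
Qed.

Theorem mainTheorem7 (x : R) (hx : 0 < x) :
  (exists I1 : R,
      is_RInt_gen (fun t : R => (sin t) ^ 2 / (t + x) ^ 2)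
                  (at_point 0) (Rbar_locally p_infty) I1
      /\ I1 < 1 / (2 * x))
  /\
  (exists I2 : R,
      is_RInt_gen (fun t : R => Rabs (sin t) / (t + x) ^ 2)
                  (at_point 0) (Rbar_locally p_infty) I2
      /\ I2 < 2 / (PI * x)).
Proof.
  split; [apply part1 | apply part2]; exact hx.
Qed.
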